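(* (1) There exists a function $r:[\omega]^\omega\to[\omega]^\omega$ such that for every $x,z\in[\omega]^\omega$ there is $y\in[x]^\omega$ with $r(y)=z$. (2) There exists a function $r:[\omega]^\omega\to 2^{\aleph_0}$ such that for every $x\in[\omega]^\omega$ and every $\beta<2^{\aleph_0}$ there is $y\in[x]^\omega$ with $r(y)=\beta$. (3) For every infinite cardinal $\lambda$ there is a function $r:[\lambda]^\omega\to 2^{\aleph_0}$ such that for every $x\in[\lambda]^\omega$ and every $\beta<2^{\aleph_0}$ there is $y\in[x]^\omega$ with $r(y)=\beta$ (and likewise with $[\omega]^\omega$ as target in place of $2^{\aleph_0}$).
   Context: Work in ZFC. For a set $X$, $[X]^\omega$ denotes the set of countably infinite subsets of $X$. *)

(* Defs.v *)
From Stdlib Require Import Classical FunctionalExtensionality PropExtensionality.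

Definition countably_infinite {T : Type} (A : T -> Prop) : Prop :=
  exists f : nat -> T,
    (forall n m, f n = f m -> n = m) /\ (forall t, A t <-> exists n, f n = t).

Definition subset {T : Type} (A B : T -> Prop) : Prop := forall t, A t -> B t.

Definition infinite_type (T : Type) : Prop :=
  exists f : nat -> T, forall n m, f n = f m -> n = m.

(* There is r : [L]^omega -> 2^aleph0 (modelled as nat -> bool) such that for every
   x in [L]^omega and every beta, some y in [x]^omega has r y = beta. *)
Definition onto_continuum_everywhere (L : Type) : Prop :=
  exists r : (L -> Prop) -> (nat -> bool),
    forall x : L -> Prop, countably_infinite x ->
    forall beta : nat -> bool,
    exists y : L -> Prop, subset y x /\ countably_infinite y /\ r y = beta.

Definition onto_omega_everywhere (L : Type) : Prop :=
  exists r : (L -> Prop) -> (nat -> Prop),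
    (forall y : L -> Prop, countably_infinite y -> countably_infinite (r y)) /\
    forall x : L -> Prop, countably_infinite x ->
    forall z : nat -> Prop, countably_infinite z ->
    exists y : L -> Prop, subset y x /\ countably_infinite y /\ r y = z.

(* Main.v *)
Require Import Defs.
From mathcomp Require Import ssreflect ssrbool eqtype boolp wochoice.
From Stdlib Require Import Classical ClassicalEpsilon FunctionalExtensionality PropExtensionality Wellfounded Lia PeanoNat.

Lemma WO (T : Type) : exists lt : T -> T -> Prop,
  well_founded lt /\ (forall x y, lt x y \/ x = y \/ lt y x).
Proof.
elim/Peq: T => T.
have [R HR] := well_ordering_principle T.
have min2 : forall x y, R x y \/ R y x.
  move=> x y.
  have [|z [[Hz Hmin] _]] := HR [pred w | (w == x) || (w == y)].
    by exists x; rewrite inE eqxx.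
  move: Hz; rewrite inE => /orP[/eqP Ez|/eqP Ez]; subst z.
    by left; apply: Hmin; rewrite inE eqxx orbT.
  by right; apply: Hmin; rewrite inE eqxx.
have anti : forall x y, R x y -> R y x -> x = y.
  move=> x y Rxy Ryx.
  have refl : forall w, R w w by move=> w; case: (min2 w w).
  have [|z [_ Hu]] := HR [pred w | (w == x) || (w == y)].
    by exists x; rewrite inE eqxx.
  have ex : z = x.
    apply: Hu; split; first by rewrite inE eqxx.
    move=> w; rewrite inE => /orP[/eqP Ew|/eqP Ew]; subst w; by [].
  have ey : z = y.
    apply: Hu; split; first by rewrite inE eqxx orbT.
    move=> w; rewrite inE => /orP[/eqP Ew|/eqP Ew]; subst w; by [].
  by rewrite -ex ey.
exists (fun x y => R x y /\ x <> y); split.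
  move=> x; apply: NNPP => Hx.
  have [|z [[Hz Hmin] _]] := HR [pred w | `[< ~ Acc (fun x y => R x y /\ x <> y) w >]].
    by exists x; rewrite inE; apply/asboolP.
  move: Hz; rewrite inE => /asboolP; apply; constructor => y [Ryz Hyz].
  apply: NNPP => Hy.
  have Rzy : R z y by apply: Hmin; rewrite inE; apply/asboolP.
  by apply: Hyz; apply: anti.
move=> x y; case: (Classical_Prop.classic (x = y)) => [->|Hne]; first by right; left.
case: (min2 x y) => H; [left | right; right]; split => //.
by move=> E; apply: Hne.
Qed.

Definition injective_fun {A B : Type} (f : A -> B) := forall a b, f a = f b -> a = b.

Lemma wf_min {T} (lt : T -> T -> Prop) (P : T -> Prop) :
  well_founded lt -> (exists t, P t) -> exists t, P t /\ forall s, lt s t -> ~ P s.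
Proof.
intros Hwf [t Ht]. apply NNPP; intro Hno.
assert (forall u, ~ P u) as H.
{ intro u. induction u as [u IH] using (well_founded_ind Hwf).
  intro Hu. apply Hno. exists u. split; [exact Hu|]. intros s Hs. exact (IH s Hs). }
exact (H t Ht).
Qed.

Lemma Short (T : Type) : exists lt : T -> T -> Prop, well_founded lt /\
  (forall x y, lt x y \/ x = y \/ lt y x) /\
  forall t, ~ exists k : T -> T, injective_fun k /\ forall a, lt (k a) t.
Proof.
destruct (WO T) as [lt0 [Hwf Htri]].
set (big := fun t => exists k : T -> T, injective_fun k /\ forall a, lt0 (k a) t).
destruct (Classical_Prop.classic (exists t, big t)) as [Hb|Hnb].
- destruct (wf_min lt0 big Hwf Hb) as [t0 [[g [Hg Hgt]] Hmin]].
  exists (fun x y => lt0 (g x) (g y)). split; [|split].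
  + apply (wf_inverse_image _ _ lt0 g Hwf).
  + intros x y. destruct (Htri (g x) (g y)) as [H|[H|H]]; auto.
  + intros t [k [Hk Hkt]]. apply (Hmin (g t) (Hgt t)).
    exists (fun a => g (k a)). split.
    * intros a b E. apply Hk, Hg, E.
    * intro a. apply Hkt.
- exists lt0. split; [exact Hwf|split; [exact Htri|]].
  intros t H. apply Hnb. exists t. exact H.
Qed.

Lemma Assign (T U : Type) (P : T -> U -> Prop) (u0 : U) :
  (forall t, exists k : T -> U, injective_fun k /\ forall a, P t (k a)) ->
  exists h : T -> U, injective_fun h /\ forall t, P t (h t).
Proof.
intros Hpool.
destruct (Short T) as [lt [Hwf [Htri Hsm]]].
set (F := fun (t : T) (rec : forall s, lt s t -> U) =>
  epsilon (inhabits u0) (fun u => P t u /\ forall s (H : lt s t), u <> rec s H)).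
set (h := Fix Hwf (fun _ => U) F).
assert (Heq : forall t, h t = F t (fun s _ => h s)).
{ intro t. unfold h. apply (Fix_eq Hwf (fun _ => U) F). intros x f g Hfg.
  unfold F. f_equal. assert (f = g) as ->; [|reflexivity].
  apply functional_extensionality_dep. intro s.
  apply functional_extensionality_dep. intro H. apply Hfg. }
assert (Hspec : forall t, P t (h t) /\ forall s, lt s t -> h t <> h s).
{ intro t. rewrite (Heq t). unfold F.
  match goal with |- context [epsilon ?i ?Q] =>
    assert (HQ : exists u, Q u) end.
  { apply NNPP. intro Hno.
    destruct (Hpool t) as [k [Hk HkP]].
    assert (Hc : forall a, exists s, lt s t /\ k a = h s).
    { intro a. apply NNPP. intro Hn. apply Hno. exists (k a). split; [apply HkP|].
      intros s Hs E. apply Hn. exists s. split; assumption. }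
    destruct (choice _ Hc) as [m Hm].
    apply (Hsm t). exists m. split.
    - intros a b E. apply Hk. destruct (Hm a) as [_ Ea]. destruct (Hm b) as [_ Eb].
      rewrite Ea Eb E. reflexivity.
    - intro a. apply (Hm a). }
  pose proof (epsilon_spec (inhabits u0) _ HQ) as [H1 H2].
  split; [exact H1|]. intros s Hs. exact (H2 s Hs). }
exists h. split.
- intros a b E. destruct (Htri a b) as [H|[H|H]]; auto.
  + exfalso. apply (proj2 (Hspec b) a H). symmetry. exact E.
  + exfalso. apply (proj2 (Hspec a) b H). exact E.
- intro t. apply Hspec.
Qed.

Definition inf {T : Type} (A : T -> Prop) :=
  exists f : nat -> T, injective_fun f /\ forall n, A (f n).

Lemma ci_inf {T} (A : T -> Prop) : countably_infinite A -> inf A.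
Proof. intros [f [Hf HA]]. exists f. split; [exact Hf|]. intro n. apply HA. exists n; reflexivity. Qed.

Definition char (z : nat -> Prop) : nat -> bool :=
  fun n => if excluded_middle_informative (z n) then true else false.

Lemma char_true z n : char z n = true <-> z n.
Proof. unfold char. destruct (excluded_middle_informative (z n)); split; intros; auto; discriminate. Qed.

Lemma char_inj z z' : char z = char z' -> z = z'.
Proof.
intro E. apply functional_extensionality. intro n. apply propositional_extensionality.
rewrite -!char_true. rewrite E. tauto.
Qed.

Definition code (t : (nat -> Prop) * (nat -> bool)) : nat -> bool :=
  fun n => if Nat.even n then char (fst t) (Nat.div2 n) else snd t (Nat.div2 n).

Lemma code_inj : injective_fun code.
Proof.
intros [z b] [z' b'] E. unfold code in E; simpl in E.
assert (Ez : char z = char z').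
{ apply functional_extensionality. intro n. pose proof (f_equal (fun f => f (2*n)) E) as H.
  cbv beta in H. rewrite (proj2 (Nat.even_spec (2*n)) (ex_intro _ n Logic.eq_refl)) Nat.div2_double in H. exact H. }
assert (Eb : b = b').
{ apply functional_extensionality. intro n. pose proof (f_equal (fun f => f (S (2*n))) E) as H.
  cbv beta in H. rewrite Nat.even_succ -Nat.negb_even (proj2 (Nat.even_spec (2*n)) (ex_intro _ n Logic.eq_refl)) in H. cbn [negb] in H. rewrite Nat.div2_succ_double in H. exact H. }
apply char_inj in Ez. subst. reflexivity.
Qed.

Definition bit (b : bool) : nat := if b then 1 else 0.

Definition emb {T} (g : nat -> T) (c : nat -> bool) : T -> Prop :=
  fun m => exists n, g (2*n + bit (c n)) = m.

Lemma bit_eq n m b b' : 2*n + bit b = 2*m + bit b' -> n = m /\ b = b'.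
Proof. destruct b, b'; simpl; intros; split; try reflexivity; try lia. Qed.

Lemma emb_ci {T} (g : nat -> T) c : injective_fun g -> countably_infinite (emb g c).
Proof.
intro Hg. exists (fun n => g (2*n + bit (c n))). split.
- intros n m E. apply Hg in E. apply bit_eq in E. tauto.
- intro t. unfold emb. tauto.
Qed.

Lemma emb_sub {T} (g : nat -> T) c (x : T -> Prop) : (forall n, x (g n)) -> subset (emb g c) x.
Proof. intros Hx t [n <-]. apply Hx. Qed.

Lemma emb_inj {T} (g : nat -> T) c c' : injective_fun g -> emb g c = emb g c' -> c = c'.
Proof.
intros Hg E. apply functional_extensionality. intro n.
assert (H : emb g c' (g (2*n + bit (c n)))).
{ rewrite -E. exists n. reflexivity. }
destruct H as [m Hm]. apply Hg in Hm. apply bit_eq in Hm. destruct Hm as [-> ->]. reflexivity.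
Qed.

Lemma core : exists r0 : (nat -> Prop) -> (nat -> bool),
  forall x, inf x -> forall beta, exists y, subset y x /\ countably_infinite y /\ r0 y = beta.
Proof.
destruct (Assign ((nat -> Prop) * (nat -> bool)) (nat -> Prop)
  (fun t y => inf (fst t) -> subset y (fst t) /\ countably_infinite y) (fun _ => True))
  as [h [Hh HP]].
{ intros [x b]. destruct (Classical_Prop.classic (inf x)) as [[g [Hg Hx]]|Hn].
  - exists (fun a => emb g (code a)). split.
    + intros a a' E. apply code_inj. exact (emb_inj g _ _ Hg E).
    + intros a _. split; [apply emb_sub; exact Hx | apply emb_ci; exact Hg].
  - exists (fun a => emb (fun n => n) (code a)). split.
    + intros a a' E. apply code_inj. refine (emb_inj _ _ _ _ E). intros ? ? E'; exact E'.
    + intros a Hi. contradiction. }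
exists (fun y => match excluded_middle_informative (exists t, h t = y) with
  | left H => snd (proj1_sig (constructive_indefinite_description _ H))
  | right _ => fun _ => false end).
intros x Hx beta. exists (h (x, beta)).
destruct (HP (x, beta) Hx) as [Hs Hc]. split; [exact Hs|split; [exact Hc|]].
destruct (excluded_middle_informative (exists t, h t = h (x, beta))) as [H|H].
- destruct (constructive_indefinite_description _ H) as [t Ht]. simpl.
  apply Hh in Ht. subst t. reflexivity.
- exfalso. apply H. exists (x, beta). reflexivity.
Qed.
From mathcomp Require classical_sets.

Definition AD {L : Type} (F : (L -> Prop) -> Prop) :=
  (forall a, F a -> countably_infinite a) /\
  (forall a b, F a -> F b -> inf (fun l => a l /\ b l) -> a = b).

Lemma inf_sym {L} (a b : L -> Prop) : inf (fun l => a l /\ b l) -> inf (fun l => b l /\ a l).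
Proof. intros [f [Hf H]]. exists f. split; [exact Hf|]. intro n. destruct (H n); split; assumption. Qed.

Lemma MAD (L : Type) : exists F : (L -> Prop) -> Prop, AD F /\
  forall x, countably_infinite x -> exists a, F a /\ inf (fun l => x l /\ a l).
Proof.
destruct (@classical_sets.Zorn_bigcup (L -> Prop) (fun F => AD F)) as [A [HA Hmax]].
- intros G HG Htot. split.
  + intros a [X HX Xa]. exact (proj1 (HG X HX) a Xa).
  + intros a b [X HX Xa] [Y HY Yb] Hi.
    destruct (Htot X Y HX HY) as [HXY|HYX].
    * exact (proj2 (HG Y HY) a b (HXY a Xa) Yb Hi).
    * exact (proj2 (HG X HX) a b Xa (HYX b Yb) Hi).
- exists A. split; [exact HA|]. intros x Hx. apply NNPP. intro Hno.
  apply (Hmax (fun a => A a \/ a = x)).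
  + split.
    * intros a Ha. left. exact Ha.
    * intro Hs. pose proof (Hs x (or_intror Logic.eq_refl)) as Ax.
      apply Hno. exists x. split; [exact Ax|].
      destruct (ci_inf x Hx) as [f [Hf Hfx]]. exists f. split; [exact Hf|]. intro n. split; apply Hfx.
  + split.
    * intros a [Ha| ->]; [exact (proj1 HA a Ha)|exact Hx].
    * intros a b [Ha| ->] [Hb| ->] Hi.
      -- exact (proj2 HA a b Ha Hb Hi).
      -- exfalso. apply Hno. exists a. split; [exact Ha|]. apply inf_sym. exact Hi.
      -- exfalso. apply Hno. exists b. split; [exact Hb|]. exact Hi.
      -- reflexivity.
Qed.
Lemma cont (L : Type) : onto_continuum_everywhere L.
Proof.
destruct (Classical_Prop.classic (inhabited L)) as [[l0]|HnL].
2:{ exists (fun _ _ => false). intros x [f _]. exfalso. apply HnL. exact (inhabits (f 0)). }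
destruct (MAD L) as [F [[HFci HFad] HFx]].
destruct core as [r0 Hr0].
set (ENUM := fun a : L -> Prop => epsilon (inhabits (fun _ : nat => l0))
  (fun f => injective_fun f /\ forall t, a t <-> exists n, f n = t)).
set (Ach := fun y : L -> Prop => epsilon (inhabits (fun _ : L => False))
  (fun a => F a /\ subset y a)).
exists (fun y => r0 (fun n => y (ENUM (Ach y) n))).
intros x Hx beta.
destruct (HFx x Hx) as [a [Fa [g [Hg Hgxa]]]].
assert (He : injective_fun (ENUM a) /\ forall t, a t <-> exists n, ENUM a n = t).
{ unfold ENUM. apply epsilon_spec. exact (HFci a Fa). }
set (e := ENUM a) in *. destruct He as [He Hea].
assert (Hm : forall k, exists n, e n = g k).
{ intro k. apply Hea. apply Hgxa. }
destruct (choice _ Hm) as [m Hmk].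
assert (Hx' : inf (fun n => x (e n))).
{ exists m. split.
  - intros i j E. apply Hg. rewrite -(Hmk i) -(Hmk j) E. reflexivity.
  - intro k. rewrite Hmk. apply Hgxa. }
destruct (Hr0 _ Hx' beta) as [y' [Hy's [[f' [Hf' Hf'y]] Hr]]].
set (y := fun l => exists n, y' n /\ e n = l).
exists y.
assert (Hya : subset y a).
{ intros l [n [_ <-]]. apply Hea. exists n. reflexivity. }
assert (Hyci : countably_infinite y).
{ exists (fun k => e (f' k)). split.
  - intros i j E. apply Hf', He, E.
  - intro l. split.
    + intros [n [Hn <-]]. destruct (proj1 (Hf'y n) Hn) as [k <-]. exists k. reflexivity.
    + intros [k <-]. exists (f' k). split; [apply Hf'y; exists k; reflexivity|reflexivity]. }
split; [|split; [exact Hyci|]].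
- intros l [n [Hn <-]]. exact (Hy's n Hn).
- assert (HA : F (Ach y) /\ subset y (Ach y)).
  { unfold Ach. apply epsilon_spec. exists a. split; assumption. }
  destruct HA as [FA HyA].
  assert (Eq : Ach y = a).
  { apply HFad; [exact FA|exact Fa|].
    destruct (ci_inf y Hyci) as [h [Hh Hhy]]. exists h. split; [exact Hh|].
    intro n. split; [apply HyA|apply Hya]; apply Hhy. }
  rewrite Eq. fold e.
  assert (Ey : (fun n => y (e n)) = y').
  { apply functional_extensionality. intro n. apply propositional_extensionality. split.
    - intros [k [Hk Ek]]. apply He in Ek. subst k. exact Hk.
    - intro Hn. exists n. split; [exact Hn|reflexivity]. }
  rewrite Ey. exact Hr.
Qed.

Lemma omega_of (L : Type) : onto_continuum_everywhere L -> onto_omega_everywhere L.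
Proof.
intros [r Hr].
set (G := fun b : nat -> bool =>
  if excluded_middle_informative (countably_infinite (fun n => b n = true))
  then (fun n => b n = true) else (fun _ : nat => True)).
assert (HG : forall b, countably_infinite (G b)).
{ intro b. unfold G. destruct (excluded_middle_informative _) as [H|H]; [exact H|].
  exists (fun n => n). split; [intros ? ? E; exact E|]. intro t. split; [intros _; exists t; reflexivity|intros _; exact I]. }
exists (fun y => G (r y)). split.
- intros y _. apply HG.
- intros x Hx z Hz. destruct (Hr x Hx (char z)) as [y [Hs [Hc Hry]]].
  exists y. split; [exact Hs|split; [exact Hc|]].
  rewrite Hry. unfold G.
  assert (Ez : (fun n => char z n = true) = z).
  { apply functional_extensionality. intro n. apply propositional_extensionality. apply char_true. }
  rewrite Ez. destruct (excluded_middle_informative _) as [H0|H]; [reflexivity|contradiction].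
Qed.

Theorem lemma2p1 :
  onto_omega_everywhere nat /\
  onto_continuum_everywhere nat /\
  (forall L : Type, infinite_type L ->
     onto_continuum_everywhere L /\ onto_omega_everywhere L).
Proof.
split; [apply omega_of, cont|split; [apply cont|]].
intros L _. split; [apply cont|apply omega_of, cont].
Qed.
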